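(* Under the setting, assumptions (A1)–(A2) and the algorithm PDAc-L described in the context, fix any $(x^\star,y^\star)\in\Omega$ and let $J(x,y)=\mathcal L(x,y^\star)-\mathcal L(x^\star,y)$. Then for every $n\ge1$, $$\tau_nJ(x_n,y_n)\le\langle x_{n+1}-z_{n+1},x^\star-x_{n+1}\rangle+\frac1\beta\langle y_n-y_{n-1},y^\star-y_n\rangle+\psi\delta_n\langle x_n-z_{n+1},x_{n+1}-x_n\rangle+\tau_n\langle\theta_n,x_n-x_{n+1}\rangle+\tau_n\Phi_n^y.$$
   Context: Let $f:\mathbb{R}^p\to(-\infty,+\infty]$ and $g:\mathbb{R}^q\to(-\infty,+\infty]$ be proper closed convex functions; $f^*(y)=\sup_u\{\langle y,u\rangle-f(u)\}$ is the Fenchel conjugate, $\mathrm{dom}(h)=\{x:h(x)<+\infty\}$, and for $\lambda>0$, $\mathrm{Prox}_{\lambda h}(x)=\arg\min_u\{h(u)+\frac{1}{2\lambda}\|u-x\|^2\}$. Let $\Phi:\mathrm{dom}(g)\times\mathrm{dom}(f^* )\to\mathbb{R}$ be continuous and $\mathcal L(x,y)=g(x)+\Phi(x,y)-f^*(y)$. Let $\Omega$ be the set of $(x^\star,y^\star)\in\mathrm{dom}(g)\times\mathrm{dom}(f^* )$ with $-\nabla_x\Phi(x^\star,y^\star)\in\partial g(x^\star)$ and $\nabla_y\Phi(x^\star,y^\star)\in\partial f^*(y^\star)$. Assume: (A1) $\Omega\neq\emptyset$, $\mathrm{dom}(g)\times\mathrm{dom}(f^* )\subseteq\mathrm{dom}(\Phi)$,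 and $\mathcal L(x^\star,y^\star)$ is finite; (A2) for each $y\in\mathrm{dom}(f^* )$, $\Phi(\cdot,y)$ is convex and differentiable, for each $x\in\mathrm{dom}(g)$, $\Phi(x,\cdot)$ is concave and differentiable, and for all bounded $\mathcal X\subset\mathbb R^q$, $\mathcal Y\subset\mathbb R^p$ there exist $L_{yy},L_{xx}\ge 0$, $L_{xy}>0$ with $\|\nabla_y\Phi(x,y)-\nabla_y\Phi(x,\tilde y)\|\le L_{yy}\|y-\tilde y\|$ and $\|\nabla_x\Phi(x,y)-\nabla_x\Phi(\tilde x,\tilde y)\|\le L_{xx}\|x-\tilde x\|+L_{xy}\|y-\tilde y\|$ for all $x,\tilde x\in\mathcal X\cap\mathrm{dom}(g)$, $y,\tilde y\in\mathcal Y\cap\mathrm{dom}(f^* )$. Algorithm PDAc-L: choose $\psi\in(1,1+\sqrt3)$, $\xi>0$, $\varphi>1$ with $\omega:=2\psi-\xi-\frac{\psi^3\varphi}{1+\psi}>0$, $\tau_{\max}>0$, $\nu\in(0,1)$, $\mu\in(0,1)$, $\eta\in[0,1)$, an integer $M\ge1$, $\beta>0$, $x_0\in\mathrm{dom}(g)$, $y_0\in\mathrm{dom}(f^* )$, $\tau_0\in(0,\tau_{\max}]$; set $z_0=x_0$, $\delta_0=1$. For $n=1,2,\dots$: (1) $z_n=\frac{\psi-1}{\psi}x_{n-1}+\frac1\psi z_{n-1}$ and $x_n=\mathrm{Prox}_{\tau_{n-1}g}(z_n-\tau_{n-1}\nabla_x\Phi(x_{n-1},y_{n-1}))$. (2)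 Let $\tau=\min\{\varphi\tau_{n-1},\tau_{\max}\}$; set $\tau_n=\tau\mu^i$ and $y_n=\mathrm{Prox}_{\beta\tau_n f^*}(y_{n-1}+\beta\tau_n\nabla_y\Phi(x_n,y_{n-1}))$, where $i$ is the smallest nonnegative integer such that $\frac{\tau_n\tau_{n-1}}{\xi}\|\theta_n\|^2+2\tau_n\Phi_n^y\le\nu r_n+(1-\nu)c_n$, with $\theta_n=\nabla_x\Phi(x_n,y_n)-\nabla_x\Phi(x_{n-1},y_{n-1})$, $\Phi_n^y=\Phi(x_n,y_{n-1})+\langle\nabla_y\Phi(x_n,y_{n-1}),y_n-y_{n-1}\rangle-\Phi(x_n,y_n)$, $r_n=\omega\delta_{n-1}\|x_n-x_{n-1}\|^2+\frac1\beta\|y_n-y_{n-1}\|^2$, $c_n=\frac{\eta}{|\mathcal I_n|}\sum_{i\in\mathcal I_n}r_i$, $\mathcal I_n=\{n-1,n-2,\dots,\max\{n-M,1\}\}$ (the $r_i$ for $i<n$ being the values from earlier iterations; for $n=1$, $\mathcal I_1=\emptyset$ and $c_1:=0$). (3) $\delta_n=\tau_n/\tau_{n-1}$. *)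

(* Defs.v *)
From HB Require Import structures.
From mathcomp Require Import all_boot all_order all_algebra.
From mathcomp Require Import all_classical all_reals all_analysis.
Set Implicit Arguments. Unset Strict Implicit. Unset Printing Implicit Defensive.
Import Order.TTheory GRing.Theory Num.Theory.
Import numFieldNormedType.Exports.
Local Open Scope classical_set_scope.
Local Open Scope ring_scope.

Section Defs.
Variable R : realType.

Definition dot n (u v : 'rV[R]_n) : R := \sum_(i < n) u 0 i * v 0 i.
Definition enorm n (u : 'rV[R]_n) : R := Num.sqrt (dot u u).

Definition edom n (h : 'rV[R]_n -> \bar R) : set 'rV[R]_n :=
  [set u | (h u < +oo)%E].

Definition proper_fun n (h : 'rV[R]_n -> \bar R) : Prop :=
  (forall u, h u != -oo%E) /\ (exists u, (h u < +oo)%E).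

Definition closed_fun n (h : 'rV[R]_n -> \bar R) : Prop :=
  closed [set ua : 'rV[R]_n * R | (h ua.1 <= ua.2%:E)%E].

Definition convex_efun n (h : 'rV[R]_n -> \bar R) : Prop :=
  forall u v (t : R), 0 <= t <= 1 -> (h u < +oo)%E -> (h v < +oo)%E ->
    (h (t *: u + (1 - t) *: v)%R <= t%:E * h u + (1 - t)%R%:E * h v)%E.

Definition convex_on n (D : set 'rV[R]_n) (F : 'rV[R]_n -> R) : Prop :=
  forall u v (t : R), 0 <= t <= 1 -> D u -> D v ->
    F (t *: u + (1 - t) *: v) <= t * F u + (1 - t) * F v.

Definition concave_on n (D : set 'rV[R]_n) (F : 'rV[R]_n -> R) : Prop :=
  convex_on D (fun u => - F u).

Definition fconj n (h : 'rV[R]_n -> \bar R) (y : 'rV[R]_n) : \bar R :=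
  ereal_sup [set ((dot y u)%:E - h u)%E | u in [set: 'rV[R]_n]].

Definition subdiff n (h : 'rV[R]_n -> \bar R) (x : 'rV[R]_n) : set 'rV[R]_n :=
  [set v | forall u, (h x + (dot v (u - x)%R)%:E <= h u)%E].

Definition is_prox n (lam : R) (h : 'rV[R]_n -> \bar R) (v u : 'rV[R]_n) : Prop :=
  forall w, (h u + ((enorm (u - v)%R) ^+ 2 / (2 * lam))%:E
             <= h w + ((enorm (w - v)%R) ^+ 2 / (2 * lam))%:E)%E.

Definition has_grad n (F : 'rV[R]_n -> R) (x G : 'rV[R]_n) : Prop :=
  forall e : R, 0 < e ->
    \forall h \near (0 : 'rV[R]_n),
      `|F (x + h) - F x - dot G h| <= e * enorm h.

Definition ebounded n (S : set 'rV[R]_n) : Prop :=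
  exists Mb : R, forall u, S u -> enorm u <= Mb.

Definition omegaPD (psi xi phi : R) : R :=
  2 * psi - xi - psi ^+ 3 * phi / (1 + psi).

End Defs.

Section PDAcL.
Variables (R : realType) (p q : nat).
Variables (g : 'rV[R]_q -> \bar R) (f : 'rV[R]_p -> \bar R).
Variable Phi : 'rV[R]_q -> 'rV[R]_p -> R.
Variables (Gx : 'rV[R]_q -> 'rV[R]_p -> 'rV[R]_q) (Gy : 'rV[R]_q -> 'rV[R]_p -> 'rV[R]_p).
Variables (psi xi phi taumax nu mu eta beta : R) (M : nat).
Variables (x z : nat -> 'rV[R]_q) (y : nat -> 'rV[R]_p) (tau delta : nat -> R).

Definition pd_r (i : nat) : R :=
  omegaPD psi xi phi * delta i.-1 * enorm (x i - x i.-1) ^+ 2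
  + beta^-1 * enorm (y i - y i.-1) ^+ 2.

Definition pd_c (n : nat) : R :=
  if n == 1%N then 0 else
  eta / (n - maxn (n - M) 1)%:R * \sum_(maxn (n - M) 1 <= i < n) pd_r i.

Definition pd_ls (n : nat) (t : R) (yt : 'rV[R]_p) : Prop :=
  let theta := Gx (x n) yt - Gx (x n.-1) (y n.-1) in
  let Phiy := Phi (x n) (y n.-1) + dot (Gy (x n) (y n.-1)) (yt - y n.-1)
              - Phi (x n) yt in
  let rt := omegaPD psi xi phi * delta n.-1 * enorm (x n - x n.-1) ^+ 2
            + beta^-1 * enorm (yt - y n.-1) ^+ 2 in
  t * tau n.-1 / xi * enorm theta ^+ 2 + 2 * t * Phiy
    <= nu * rt + (1 - nu) * pd_c n.

(* the sequences (x_n, y_n, z_n, tau_n, delta_n) are generated by PDAc-L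
   (x_0, y_0, tau_0 are the initial data) *)
Definition PDAcL_run : Prop :=
  [/\ z 0%N = x 0%N /\ delta 0%N = 1,
   forall n, (0 < n)%N ->
     z n = ((psi - 1) / psi) *: x n.-1 + psi^-1 *: z n.-1,
   forall n, (0 < n)%N ->
     is_prox (tau n.-1) g (z n - tau n.-1 *: Gx (x n.-1) (y n.-1)) (x n),
   forall n, (0 < n)%N ->
     exists i : nat,
       [/\ tau n = Num.min (phi * tau n.-1) taumax * mu ^+ i,
           is_prox (beta * tau n) (fconj f)
             (y n.-1 + (beta * tau n) *: Gy (x n) (y n.-1)) (y n),
           pd_ls n (tau n) (y n) &
           forall j : nat, (j < i)%N ->
             forall yt : 'rV[R]_p,
               let tj := Num.min (phi * tau n.-1) taumax * mu ^+ j in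
               is_prox (beta * tj) (fconj f)
                 (y n.-1 + (beta * tj) *: Gy (x n) (y n.-1)) yt ->
               ~ pd_ls n tj yt] &
   forall n, (0 < n)%N -> delta n = tau n / tau n.-1].

End PDAcL.

(* Main.v *)
Require Import Defs.
From HB Require Import structures.
From mathcomp Require Import all_boot all_order all_algebra.
From mathcomp Require Import all_classical all_reals all_analysis.
From mathcomp Require Import ring lra.
Import Order.TTheory GRing.Theory Num.Theory.
Import numFieldNormedType.Exports.
Local Open Scope classical_set_scope.
Local Open Scope ring_scope.
Ltac dotsimp := rewrite /dot ?mulr_sumr -?sumrN -?sumrB -?big_split /=; apply: eq_bigr => ? _; rewrite !mxE; ring.

Section S.
Context {R : realType}.


Lemma dot_ge0 {n} (u : 'rV[R]_n) : 0 <= dot u u.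
Proof. by apply: sumr_ge0 => i _; rewrite -expr2 sqr_ge0. Qed.

Lemma enorm_sq {n} (u : 'rV[R]_n) : enorm u ^+ 2 = dot u u.
Proof. by rewrite /enorm sqr_sqrtr // dot_ge0. Qed.

Lemma enormZ {n} (u : 'rV[R]_n) t : 0 <= t -> enorm (t *: u) = t * enorm u.
Proof.
move=> t0; rewrite /enorm.
have -> : dot (t *: u) (t *: u) = t ^+ 2 * dot u u by rewrite /dot mulr_sumr; apply: eq_bigr => ? _; rewrite !mxE; ring.
by rewrite sqrtrM ?sqr_ge0 // sqrtr_sqr ger0_norm.
Qed.

Lemma enorm_ge0 {n} (u : 'rV[R]_n) : 0 <= enorm u.
Proof. exact: sqrtr_ge0. Qed.

Lemma conv_grad {n} (D : set 'rV[R]_n) F x w G :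
  convex_on D F -> D x -> D w -> has_grad F x G -> F x + dot G (w - x) <= F w.
Proof.
move=> cF Dx Dw hG.
set d := w - x.
suff H : forall e, 0 < e -> dot G d <= F w - F x + e * enorm d.
  have nd := enorm_ge0 d.
  have : dot G d <= F w - F x.
    apply/ler_addgt0Pr => e e0.
    have e1 : 0 < e / (enorm d + 1) by rewrite divr_gt0 // ltr_wpDl.
    have := H _ e1.
    have : e / (enorm d + 1) * enorm d <= e.
      rewrite mulrAC ler_pdivrMr ?ltr_wpDl //; nra.
    lra.
  lra.
move=> e e0.
have := hG e e0 => /nbhs_norm0P [eps /= eps0 Peps].
have nd : 0 <= `|d| by [].
set t := Num.min 1 (eps / (2 * (`|d| + 1))).
have t0 : 0 < t by rewrite lt_min ltr01 /= divr_gt0 // mulr_gt0 // ltr_wpDl.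
have t1 : t <= 1 by rewrite ge_min lexx.
have t2 : t <= eps / (2 * (`|d| + 1)) by rewrite ge_min lexx orbT.
have Pt := Peps (t *: d).
have /Pt : `|t *: d| < eps.
  rewrite normrZ gtr0_norm //.
  have : eps / (2 * (`|d| + 1)) * `|d| < eps.
    rewrite mulrAC ltr_pdivrMr ?mulr_gt0 ?ltr_wpDl //; nra.
  have : t * `|d| <= eps / (2 * (`|d| + 1)) * `|d| by rewrite ler_wpM2r.
  lra.
have -> : x + t *: d = t *: w + (1 - t) *: x by apply/rowP => i; rewrite /d !mxE; ring.
have -> : dot G (t *: d) = t * dot G d by dotsimp.
rewrite enormZ; last exact: ltW.
move=> /ler_normlP [Hl _].
have Hc := cF w x t.
have /Hc : 0 <= t <= 1 by rewrite t1 ltW.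
move=> /(_ Dw Dx) Hc2.
have nd' := enorm_ge0 d.
rewrite -(ler_pM2l t0).
lra.
Qed.


Lemma small_lim (A B N : R) : 0 <= N -> (forall t, 0 < t -> t <= 1 -> A <= B + t * N) -> A <= B.
Proof.
move=> N0 H; apply/ler_addgt0Pr => e e0.
set t := Num.min 1 (e / (N + 1)).
have t0 : 0 < t by rewrite lt_min ltr01 /= divr_gt0 // ltr_wpDl.
have t1 : t <= 1 by rewrite ge_min lexx.
have t2 : t <= e / (N + 1) by rewrite ge_min lexx orbT.
have := H t t0 t1.
have : e / (N + 1) * N <= e by rewrite mulrAC ler_pdivrMr ?ltr_wpDl //; nra.
have : t * N <= e / (N + 1) * N by rewrite ler_wpM2r.
lra.
Qed.

Lemma prox_opt {n} (lam : R) (h : 'rV[R]_n -> \bar R) v u w (U W : R) :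
  0 < lam -> convex_efun h -> is_prox lam h v u -> h u = U%:E -> h w = W%:E ->
  dot (v - u) (w - u) <= lam * (W - U).
Proof.
move=> l0 hc hp hu hw.
set Dd := dot (u - v) (w - u).
set N := dot (w - u) (w - u).
have N0 : 0 <= N := dot_ge0 _.
have -> : dot (v - u) (w - u) = - Dd by rewrite /Dd; dotsimp.
suff : lam * (U - W) <= Dd by lra.
apply: (@small_lim _ Dd (N / 2)); first by rewrite divr_ge0.
move=> t t0 t1.
set wt := t *: w + (1 - t) *: u.
have H1 := hc w u t.
have /H1 : 0 <= t <= 1 by rewrite t1 ltW.
rewrite hu hw => /(_ (ltry _) (ltry _)) H2.
have H3 := hp wt.
have H4 := le_trans H3 (leeD2r _ H2).
rewrite hu -!EFinM -!EFinD lee_fin in H4.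
rewrite !enorm_sq in H4.
set il := (2 * lam)^-1 in H4.
have E : dot (wt - v) (wt - v) = dot (u - v) (u - v) + (2 * t * Dd + t ^+ 2 * N).
  rewrite /Dd /N /wt; dotsimp.
rewrite E in H4.
have H5 : t * (U - W) <= (2 * t * Dd + t ^+ 2 * N) * il.
  rewrite mulrDl in H4; lra.
have H6 : 2 * lam * (t * (U - W)) <= 2 * lam * ((2 * t * Dd + t ^+ 2 * N) * il).
  by rewrite ler_pM2l ?mulr_gt0.
have il1 : 2 * lam * il = 1 by rewrite /il mulfV // mulf_neq0 // gt_eqF.
have E2 : 2 * lam * ((2 * t * Dd + t ^+ 2 * N) * il) = 2 * t * Dd + t ^+ 2 * N.
  by rewrite mulrCA il1 mulr1.
rewrite E2 in H6.
rewrite -(ler_pM2l t0).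
lra.
Qed.


Lemma fconj_ge {n} (f : 'rV[R]_n -> \bar R) y {u r} : f u = r%:E ->
  ((dot y u - r)%:E <= fconj f y)%E.
Proof. move=> fu; apply: ereal_sup_ubound; exists u => //; by rewrite fu. Qed.

Lemma fconj_fin {n} (f : 'rV[R]_n -> \bar R) y : proper_fun f ->
  (fconj f y < +oo)%E -> exists a, fconj f y = a%:E.
Proof.
move=> [fn [u0 fu0]] hy.
have : f u0 \is a fin_num by rewrite fin_numE fn /= lt_eqF.
move=> /fineK fE.
have := fconj_ge f y (esym fE).
case: (fconj f y) hy => [a| |] // _ _; by exists a.
Qed.

Lemma fconj_convex {n} (f : 'rV[R]_n -> \bar R) : proper_fun f -> convex_efun (fconj f).
Proof.
move=> pf u v t /andP[t0 t1] hu hv.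
have [a ha] := fconj_fin f u pf hu.
have [b hb] := fconj_fin f v pf hv.
rewrite ha hb -!EFinM -EFinD.
apply: ge_ereal_sup => _ [w _ <-].
case: pf => fn _.
case Ef: (f w) => [r| |] /=.
- rewrite lee_fin.
  have := fconj_ge f u Ef; rewrite ha lee_fin => H1.
  have := fconj_ge f v Ef; rewrite hb lee_fin => H2.
  have -> : dot (t *: u + (1 - t) *: v) w = t * dot u w + (1 - t) * dot v w by dotsimp.
  have H3 : 0 <= t * (a - (dot u w - r)) by rewrite mulr_ge0 // subr_ge0.
  have t1' : 0 <= 1 - t by lra.
  have H4 : 0 <= (1 - t) * (b - (dot v w - r)) by rewrite mulr_ge0 // subr_ge0.
  nra.
- by rewrite leNye.
- by have := fn w; rewrite Ef.
Qed.

Lemma prox_dom {n} lam (h : 'rV[R]_n -> \bar R) v u : proper_fun h ->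
  is_prox lam h v u -> exists U, h u = U%:E.
Proof.
move=> [hn [w0 hw0]] hp.
have := hp w0.
have := hn u.
case: (h u) => [U| |] //; first by move=> *; exists U.
move=> _; case: (h w0) hw0 => [W| |] //=.
Qed.


Lemma has_grad_neg {n} (F : 'rV[R]_n -> R) x G :
  has_grad F x G -> has_grad (fun u => - F u) x (- G).
Proof.
move=> H e e0; apply: filterS (H e e0) => h.
have -> : - F (x + h) - - F x - dot (- G) h = - (F (x + h) - F x - dot G h).
  have -> : dot (- G) h = - dot G h by dotsimp.
  ring.
by rewrite normrN.
Qed.

Lemma fconj_proper {n} (f : 'rV[R]_n -> \bar R) y0 : proper_fun f ->
  (fconj f y0 < +oo)%E -> proper_fun (fconj f).
Proof.
move=> [fn [u0 fu0]] hy; split; last by exists y0.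
move=> y.
have : f u0 \is a fin_num by rewrite fin_numE fn /= lt_eqF.
move=> /fineK fE.
have := fconj_ge f y (esym fE).
by case: (fconj f y).
Qed.

End S.
Theorem lemma3p1 (R : realType) (p q : nat)
  (f : 'rV[R]_p -> \bar R) (g : 'rV[R]_q -> \bar R)
  (Phi : 'rV[R]_q -> 'rV[R]_p -> R)
  (Gx : 'rV[R]_q -> 'rV[R]_p -> 'rV[R]_q) (Gy : 'rV[R]_q -> 'rV[R]_p -> 'rV[R]_p)
  (* f, g proper closed convex *)
  (hf : [/\ proper_fun f, closed_fun f & convex_efun f])
  (hg : [/\ proper_fun g, closed_fun g & convex_efun g])
  (* Phi continuous on dom g x dom f^* *)
  (hPhic : {within edom g `*` edom (fconj f),
             continuous (fun xy : 'rV[R]_q * 'rV[R]_p => Phi xy.1 xy.2)})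
  (* (A2): convexity / concavity and differentiability with gradients Gx, Gy *)
  (hcvx : forall yy, edom (fconj f) yy -> convex_on (edom g) (fun u => Phi u yy))
  (hccv : forall xx, edom g xx -> concave_on (edom (fconj f)) (Phi xx))
  (hGx : forall xx yy, edom g xx -> edom (fconj f) yy ->
           has_grad (fun u => Phi u yy) xx (Gx xx yy))
  (hGy : forall xx yy, edom g xx -> edom (fconj f) yy ->
           has_grad (Phi xx) yy (Gy xx yy))
  (hLip : forall (X : set 'rV[R]_q) (Y : set 'rV[R]_p), ebounded X -> ebounded Y ->
     exists Lyy Lxx Lxy : R, [/\ 0 <= Lyy, 0 <= Lxx, 0 < Lxy &
       forall x1 x2 y1 y2, X x1 -> X x2 -> Y y1 -> Y y2 ->
         edom g x1 -> edom g x2 -> edom (fconj f) y1 -> edom (fconj f) y2 ->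
         enorm (Gy x1 y1 - Gy x1 y2) <= Lyy * enorm (y1 - y2) /\
         enorm (Gx x1 y1 - Gx x2 y2) <= Lxx * enorm (x1 - x2) + Lxy * enorm (y1 - y2)])
  (* a saddle point (xs, ys) in Omega, with L(xs, ys) finite (A1) *)
  (xs : 'rV[R]_q) (ys : 'rV[R]_p)
  (hxs : edom g xs) (hys : edom (fconj f) ys)
  (hOmx : subdiff g xs (- Gx xs ys)) (hOmy : subdiff (fconj f) ys (Gy xs ys))
  (hLfin : (g xs + (Phi xs ys)%:E - fconj f ys)%E \is a fin_num)
  (* parameters of PDAc-L *)
  (psi xi phi taumax nu mu eta beta : R) (M : nat)
  (hpsi : 1 < psi < 1 + Num.sqrt 3) (hxi : 0 < xi) (hphi : 1 < phi)
  (homega : 0 < omegaPD psi xi phi) (htaumax : 0 < taumax)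
  (hnu : 0 < nu < 1) (hmu : 0 < mu < 1) (heta : 0 <= eta < 1)
  (hM : (1 <= M)%N) (hbeta : 0 < beta)
  (* iterates *)
  (x z : nat -> 'rV[R]_q) (y : nat -> 'rV[R]_p) (tau delta : nat -> R)
  (hx0 : edom g (x 0%N)) (hy0 : edom (fconj f) (y 0%N))
  (htau0 : 0 < tau 0%N <= taumax)
  (hrun : PDAcL_run g f Phi Gx Gy psi xi phi taumax nu mu eta beta M x z y tau delta) :
  let L := fun (u : 'rV[R]_q) (v : 'rV[R]_p) => (g u + (Phi u v)%:E - fconj f v)%E in
  let J := fun u v => (L u ys - L xs v)%E in
  forall n : nat, (1 <= n)%N ->
    let theta := Gx (x n) (y n) - Gx (x n.-1) (y n.-1) in
    let Phiy := Phi (x n) (y n.-1) + dot (Gy (x n) (y n.-1)) (y n - y n.-1)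
                - Phi (x n) (y n) in
    ((tau n)%:E * J (x n) (y n)
     <= (dot (x n.+1 - z n.+1) (xs - x n.+1)
         + beta^-1 * dot (y n - y n.-1) (ys - y n)
         + psi * delta n * dot (x n - z n.+1) (x n.+1 - x n)
         + tau n * dot theta (x n - x n.+1)
         + tau n * Phiy)%:E)%E.
Proof.
move=> L J n hn; cbv zeta.
case: hrun => [[hz0 hd0] hz hxp hyp hdel].
case: hf => [pf _ _]; case: hg => [pg _ cg].
have pfs := fconj_proper f ys pf hys.
have cfs := fconj_convex f pf.
have tpos : forall k, 0 < tau k.
  elim=> [|k IH]; first by case/andP: htau0.
  have [i [-> _ _ _]] := hyp k.+1 isT.
  rewrite mulr_gt0 ?exprn_gt0 //; last by case/andP: hmu.
  by rewrite lt_min htaumax andbT mulr_gt0 // (lt_trans ltr01).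
case: n hn => [//|m] _ /=.
have [gn hgn] := prox_dom _ _ _ _ pg (hxp m.+1 isT).
have [g1 hg1] := prox_dom _ _ _ _ pg (hxp m.+2 isT).
have [i [hti hpy _ _]] := hyp m.+1 isT.
have [fn hfn] := prox_dom _ _ _ _ pfs hpy.
have dym : edom (fconj f) (y m).
  case: m {hti hpy hgn hg1 hfn} => [//|k].
  have [_ [_ hpk _ _]] := hyp k.+1 isT.
  rewrite /edom /=; have [fk ->] := prox_dom _ _ _ _ pfs hpk.
  exact: ltry.
have [gs hgs] : exists r, g xs = r%:E.
  exists (fine (g xs)); apply/esym/fineK; rewrite fin_numE.
  by case: pg => -> _ /=; rewrite lt_eqF.
have [fs hfs] : exists r, fconj f ys = r%:E.
  exists (fine (fconj f ys)); apply/esym/fineK; rewrite fin_numE.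
  by case: pfs => -> _ /=; rewrite lt_eqF.
have dxn : edom g (x m.+1) by rewrite /edom /= hgn ltry.
have dyn : edom (fconj f) (y m.+1) by rewrite /edom /= hfn ltry.
have P1 := prox_opt _ _ _ _ _ _ _ (tpos _) cg (hxp m.+2 isT) hg1 hgs.
have P2 := prox_opt _ _ _ _ _ _ _ (tpos _) cg (hxp m.+1 isT) hgn hg1.
have P3 := prox_opt _ _ _ _ _ _ _ (mulr_gt0 hbeta (tpos _)) cfs hpy hfn hfs.
have G1 := conv_grad _ _ _ _ _ (hcvx _ dyn) dxn hxs (hGx _ _ dxn dyn).
have G2 := conv_grad _ _ _ _ _ (hccv _ dxn) dym hys (has_grad_neg _ _ _ (hGy _ _ dxn dym)).
rewrite /J /L hgn hgs hfn hfs.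
rewrite -!EFinD ?(EFinN, EFinB) -EFinM lee_fin.
rewrite /= in P1 P2 P3.
have hps : psi != 0 by case/andP: hpsi => h _; rewrite gt_eqF // (lt_trans ltr01).
have hzz := hz m.+2 isT; rewrite /= in hzz.
set a := x m.+2 in P1 P2 G1 *; set b := x m.+1 in P1 P2 G1 G2 hzz *.
set zz1 := z m.+1 in P2 hzz *; set zz2 := z m.+2 in P1 hzz *.
set Gn := Gx b (y m.+1) in P1 G1 *; set Gp := Gx (x m) (y m) in P2 *.
set Gyy := Gy b (y m) in P3 G2 *.
set T := tau m.+1 in P1 P3 hti *; set T0 := tau m in P2 hti *.
set ym := y m in P3 G2 *; set yn := y m.+1 in P3 G1 *.
have I1 : dot (zz2 - T *: Gn - a) (xs - a) = - dot (a - zz2) (xs - a) - T * dot Gn (xs - a) by dotsimp.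
have I2 : dot (zz1 - T0 *: Gp - b) (a - b) = - dot (b - zz1) (a - b) - T0 * dot Gp (a - b) by dotsimp.
have I3 : dot (b - zz2) (a - b) = psi^-1 * dot (b - zz1) (a - b).
  rewrite hzz /dot mulr_sumr; apply: eq_bigr => k _; rewrite !mxE; field; exact: hps.
have I5 : dot (Gn - Gp) (b - a) = dot Gp (a - b) - dot Gn (a - b) by dotsimp.
have I6 : dot Gn (xs - b) = dot Gn (xs - a) + dot Gn (a - b) by dotsimp.
have I7 : dot (ym + (beta * T) *: Gyy - yn) (ys - yn) = - dot (yn - ym) (ys - yn) + beta * T * dot Gyy (ys - yn) by dotsimp.
have I9 : dot (- Gyy) (ys - ym) = - dot Gyy (ys - yn) - dot Gyy (yn - ym) by dotsimp.
rewrite I1 in P1; rewrite I2 in P2; rewrite I6 in G1; rewrite I7 in P3; rewrite I9 in G2.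
rewrite I3 I5.
have T0p := tpos m; have Tp := tpos m.+1.
have hd : delta m.+1 * T0 = T by rewrite hdel //= /T /T0; field; rewrite gt_eqF.
have hpd : psi * delta m.+1 * (psi^-1 * dot (b - zz1) (a - b)) = delta m.+1 * dot (b - zz1) (a - b).
  by field; exact: hps.
rewrite hpd.
have dpos : 0 <= delta m.+1 by rewrite hdel // divr_ge0 // ltW.
have P2' : delta m.+1 * (- dot (b - zz1) (a - b) - T0 * dot Gp (a - b)) <= delta m.+1 * (T0 * (g1 - gn)).
  by rewrite ler_wpM2l.
rewrite mulrBr !mulrA hd in P2'.
have P3' : beta^-1 * (- dot (yn - ym) (ys - yn) + beta * T * dot Gyy (ys - yn)) <= beta^-1 * (beta * T * (fs - fn)).
  by rewrite ler_wpM2l // invr_ge0 ltW.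
have hb : beta^-1 * beta = 1 by rewrite mulVf // gt_eqF.
rewrite mulrDr !mulrA hb !mul1r in P3'.
have G1' : T * (Phi b yn + (dot Gn (xs - a) + dot Gn (a - b))) <= T * Phi xs yn by rewrite ler_wpM2l // ltW.
have G2' : T * (- Phi b ym + (- dot Gyy (ys - yn) - dot Gyy (yn - ym))) <= T * (- Phi b ys) by rewrite ler_wpM2l // ltW.
lra.
Qed.
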